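(* Let $N$ be a natural number, $P=\{a\subseteq N: |a|\geq 2\}$, and let $\|\cdot\|_3$ be the graph coloring norm on subsets of $P$ (defined in the context). Let $k\geq 1$ and let $A\subseteq P$ satisfy $\|A\|_3=k$. Then $|A|\geq\binom{2^{k-1}+1}{2}$.
   Context: $N=\{0,\ldots,N-1\}$. For $A\subseteq P$ and $z\subseteq N$ let $A\restriction z=\{a\in A: a\subseteq z\}$. The relation ''$\|A\|_3\geq m$'' is defined recursively: $\|A\|_3\geq 0$ always; $\|A\|_3\geq 1$ iff $A\neq\emptyset$; for $m\geq 1$, $\|A\|_3\geq m+1$ iff for every $z\subseteq N$ either $\|A\restriction z\|_3\geq m$ or $\|A\restriction(N\setminus z)\|_3\geq m$. Then $\|A\|_3$ is the largest $m$ with $\|A\|_3\geq m$. *)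

(* Defs.v *)
From mathcomp Require Import all_boot.
Set Implicit Arguments. Unset Strict Implicit. Unset Printing Implicit Defensive.

Definition Ppairs (N : nat) : {set {set 'I_N}} := [set a : {set 'I_N} | 2 <= #|a|].

Definition restr (N : nat) (A : {set {set 'I_N}}) (z : {set 'I_N}) : {set {set 'I_N}} :=
  [set a in A | a \subset z].

(* norm3_ge m A  <=>  ||A||_3 >= m  (recursive definition from the paper) *)
Fixpoint norm3_ge (N : nat) (m : nat) (A : {set {set 'I_N}}) : bool :=
  match m with
  | 0 => true
  | 1 => A != set0
  | m'.+1 => [forall z : {set 'I_N}, norm3_ge m' (restr A z) || norm3_ge m' (restr A (~: z))]
  end.

Definition norm3_eq (N : nat) (A : {set {set 'I_N}}) (k : nat) : Prop :=
  norm3_ge k A /\ forall m, norm3_ge m A -> m <= k.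

(* Main.v *)
Require Import Defs.
From mathcomp Require Import all_boot.
From mathcomp Require Import zify.
From Stdlib Require Import Classical.
Set Implicit Arguments. Unset Strict Implicit. Unset Printing Implicit Defensive.

Definition bnd N (f : 'I_N -> nat) c := forall x, f x < c.
Definition properc N (A : {set {set 'I_N}}) (f : 'I_N -> nat) :=
  forall a, a \in A -> exists x y, [/\ x \in a, y \in a & f x != f y].

Lemma L1 N m : forall (A : {set {set 'I_N}}) f, bnd f (2 ^ m) -> properc A f ->
  ~~ norm3_ge m.+1 A.
Proof.
elim: m => [|m IH] A f Hb Hp.
  rewrite /= negbK; apply/eqP/setP => a; rewrite in_set0.
  apply/negP => /Hp [x [y [_ _]]].
  by have := Hb x; have := Hb y; rewrite expn0; lia.
rewrite /=; apply/forallPn; exists [set x | f x < 2 ^ m].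
rewrite negb_or; apply/andP; split.
  apply: (IH _ (fun x => if f x < 2 ^ m then f x else 0)).
    by move=> x; case: ifP => //; rewrite expn_gt0.
  move=> a; rewrite inE => /andP [/Hp [x [y [xa ya nxy]]] sa].
  exists x, y; split => //.
  have := subsetP sa x xa; have := subsetP sa y ya; rewrite !inE => -> -> //.
apply: (IH _ (fun x => f x - 2 ^ m)).
  move=> x; have := Hb x; rewrite expnS; lia.
move=> a; rewrite inE => /andP [/Hp [x [y [xa ya nxy]]] sa].
exists x, y; split => //.
have := subsetP sa x xa; have := subsetP sa y ya; rewrite !inE; lia.
Qed.

Lemma exmin N (A : {set {set 'I_N}}) c : (exists f, bnd f c /\ properc A f) ->
  exists c', [/\ c' <= c, (exists f, bnd f c' /\ properc A f) &
     (0 < c' -> forall g, bnd g c'.-1 -> ~ properc A g)].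
Proof.
elim: c => [|c IH] H.
  by exists 0; split.
case: (classic (exists g, bnd g c /\ properc A g)) => [/IH [c' [h1 h2 h3]]|Hn].
  by exists c'; split => //; apply: leqW.
exists c.+1; split => // _ g Hg Hpg; apply: Hn; by exists g.
Qed.

Lemma key N (A : {set {set 'I_N}}) c f (Hb : bnd f c) : properc A f ->
  (forall g, bnd g c.-1 -> ~ properc A g) -> 'C(c, 2) <= #|A|.
Proof.
move=> Hp Hmin.
pose F x : 'I_c := Ordinal (Hb x).
have -> : 'C(c, 2) = #|[set s : {set 'I_c} | #|s| == 2]| by rewrite card_draws card_ord.
have step : forall i j : 'I_c, i < j -> [set i; j] \in [set F @: a | a : {set 'I_N} in A].
  move=> i j lij; apply: NNPP => Hn.
  pose g x := if f x == j then nat_of_ord i else if j < f x then (f x).-1 else f x.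
  have coll : forall u v, g u = g v -> f u = f v \/ (f u = i /\ f v = j) \/ (f u = j /\ f v = i).
    move=> u v; rewrite /g; case: (f u =P j); case: (f v =P j); case: (ltnP j (f u)); case: (ltnP j (f v)); lia.
  apply: (Hmin g).
    move=> x; rewrite /g; have := Hb x; have := ltn_ord j; case: (f x =P j); case: (ltnP j (f x)); lia.
  move=> a aA; have [x [y [xa ya nxy]]] := Hp a aA.
  case: (eqVneq (g x) (g y)) => [gxy|]; last by exists x, y.
  have fx : f x = i \/ f x = j by have := coll _ _ gxy; lia.
  have [w [wa fw]] : exists w, w \in a /\ f w != i /\ f w != j.
    apply: NNPP => Hw; apply: Hn; apply/imsetP; exists a => //.
    apply/eqP; rewrite eq_sym eqEcard; apply/andP; split.
      apply/subsetP => _ /imsetP [w wa ->].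
      rewrite !inE -!val_eqE /=.
      apply: contraT; rewrite negb_or => /andP [h1 h2]; case: Hw; exists w; split => //.
    rewrite cards2 (_ : i != j); last by rewrite -val_eqE /= neq_ltn lij.
    have <- : #|[set F x; F y]| = 2 by rewrite cards2 -val_eqE /= nxy.
    apply: subset_leq_card; apply/subsetP => z; rewrite !inE => /orP [] /eqP ->;
      by apply: imset_f.
  exists w, x; split => //; apply/eqP => /coll; lia.
apply: (leq_trans _ (leq_imset_card (fun a : {set 'I_N} => F @: a) A)).
apply: subset_leq_card; apply/subsetP => s; rewrite inE => /cards2P [x [y [nxy ->]]].
case: (ltngtP x y) => h; first exact: step.
  by rewrite setUC; apply: step.
by move/val_inj: h nxy => ->; rewrite eqxx.
Qed.

Theorem theorem5p36 (N k : nat) (A : {set {set 'I_N}}) :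
  1 <= k -> A \subset Ppairs N -> norm3_eq A k ->
  'C(2 ^ (k - 1) + 1, 2) <= #|A|.
Proof.
case: k => // m _ HP [Hk _].
have [c [_ [f [Hb Hp]] Hmin]] : exists c', [/\ c' <= N, (exists f, bnd f c' /\ properc A f) &
     (0 < c' -> forall g, bnd g c'.-1 -> ~ properc A g)].
  apply: exmin; exists (fun x => val x); split; first by move=> x; exact: ltn_ord.
  move=> a /(subsetP HP); rewrite inE => ca.
  have /set0Pn [x xa] : a != set0 by rewrite -card_gt0; lia.
  have /set0Pn [y ya] : a :\ x != set0.
    by rewrite -card_gt0; have := cardsD1 x a; rewrite xa; lia.
  exists x, y; split => //; first by move: ya; rewrite inE => /andP [].
  by move: ya; rewrite !inE eq_sym val_eqE => /andP [].
have lc : 2 ^ m < c.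
  rewrite ltnNge; apply/negP => le; move: Hk; apply/negP.
  apply: (L1 (f := f)) => // x; exact: leq_trans (Hb x) le.
have := key Hb Hp (Hmin (leq_ltn_trans (leq0n _) lc)).
apply: leq_trans; rewrite subn1 /= !bin2 addn1 /=.
apply: half_leq; apply: leq_mul => //; lia.
Qed.
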